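(* In the setting of the context, for every $k\in\{0,\dots,K-1\}$ and every fixed sequence of previously observed feature values $f_1,\dots,f_k$, the function $\varpi\mapsto\mathcal{A}_k(\varpi; f_1,\dots,f_k)$ on the probability simplex is concave, continuous, and piecewise linear.
   Context: There are $L$ classes $c_1,\dots,c_L$ with class variable $\mathcal{C}$, and features $F_1,\dots,F_K$ with finitely many values, jointly distributed with $\mathcal{C}$. Let $e_k>0$ be feature evaluation costs, $Q_{ij}\geqslant 0$ misclassification costs, $Q_j=[Q_{1j},\dots,Q_{Lj}]^T$, and on the simplex $\Sigma=\{\varpi\in[0,1]^L:\sum_i\omega_i=1\}$ let $g(\varpi)=\min_{1\leqslant j\leqslant L}Q_j^T\varpi$. Let $\Delta(f_{k+1}\mid f_1,\dots,f_k)=[P(F_{k+1}=f_{k+1}\mid F_1=f_1,\dots,F_k=f_k,\mathcal{C}=c_i)]_{i=1}^L$ (a column vector with nonnegative entries). Define recursively $\bar{J}_K(\varpi;f_1,\dots,f_K)=g(\varpi)$ and, for $k=K-1,\dots,0$, $$\mathcal{A}_k(\varpi;f_1,\dots,f_k)=e_{k+1}+\sum_{f_{k+1}}\Delta^T(f_{k+1}\mid f_1,\dots,f_k)\varpi\;\bar{J}_{k+1}\!\left(\frac{\operatorname{diag}(\Delta(f_{k+1}\mid f_1,\dots,f_k))\varpi}{\Delta^T(f_{k+1}\mid f_1,\dots,f_k)\varpi};f_1,\dots,f_{k+1}\right),$$ $$\bar{J}_k(\varpi;f_1,\dots,f_k)=\min\big[g(\varpi),\mathcal{A}_k(\varpi;f_1,\dots,f_k)\big],$$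 where the sum is over the possible values of $F_{k+1}$ and a summand whose factor $\Delta^T\varpi$ equals $0$ is taken to be $0$. *)

(* Defs.v *)
From HB Require Import structures.
From mathcomp Require Import all_boot all_order all_algebra.
From mathcomp Require Import all_classical all_reals all_analysis.
Set Implicit Arguments. Unset Strict Implicit. Unset Printing Implicit Defensive.
Import Order.TTheory GRing.Theory Num.Theory.
Import numFieldNormedType.Exports.
Local Open Scope classical_set_scope.
Local Open Scope ring_scope.

Section CostToGo.
Variables (R : realType) (L K : nat) (V : finType).
(* p i x = P(C = c_i, (F_1,...,F_K) = (x 0, ..., x (K-1)))  (features 0-indexed) *)
Variable p : 'I_L -> {ffun 'I_K -> V} -> R.
(* e k = cost of evaluating feature F_{k+1} (0-indexed) *)
Variable e : nat -> R.
Variable Q : 'I_L -> 'I_L -> R.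

Definition simplex : set 'rV[R]_L :=
  [set w | (forall i, 0 <= w 0 i) /\ \sum_i w 0 i = 1].

(* minimum of a finite family of reals (the seed is >= every entry, so it is
   the true minimum whenever L > 0) *)
Definition minL (c : 'I_L -> R) : R :=
  \big[Num.min/ \big[Num.max/0]_(j < L) c j]_(j < L) c j.

Definition gfun (w : 'rV[R]_L) : R := minL (fun j => \sum_i Q i j * w 0 i).

(* the event {F_1 = h 0, ..., F_k = h (k-1)} *)
Definition prefix_ok (k : nat) (h x : {ffun 'I_K -> V}) : bool :=
  [forall j : 'I_K, (j < k)%N ==> (x j == h j)].

(* Delta(v | f_1..f_k)_i = P(F_{k+1} = v | F_1..F_k = f, C = c_i)
   (set to 0 when the conditioning event has probability 0) *)
Definition Delta (k : nat) (h : {ffun 'I_K -> V}) (v : V) (i : 'I_L) : R :=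
  (\sum_(x | prefix_ok k h x && [forall j : 'I_K, (j == k :> nat) ==> (x j == v)]) p i x)
  / (\sum_(x | prefix_ok k h x) p i x).

Definition upd (k : nat) (h : {ffun 'I_K -> V}) (v : V) : {ffun 'I_K -> V} :=
  [ffun j : 'I_K => if (nat_of_ord j == k) then v else h j].

Definition Aop (k : nat) (h : {ffun 'I_K -> V}) (w : 'rV[R]_L)
  (J : {ffun 'I_K -> V} -> 'rV[R]_L -> R) : R :=
  e k + \sum_(v : V)
    (let s := \sum_i Delta k h v i * w 0 i in
     if s == 0 then 0
     else s * J (upd k h v) (\row_i (Delta k h v i * w 0 i / s))).

Fixpoint Jaux (n k : nat) (h : {ffun 'I_K -> V}) (w : 'rV[R]_L) : R :=
  match n with
  | 0 => gfun w
  | n'.+1 => Num.min (gfun w) (Aop k h w (Jaux n' k.+1))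
  end.

(* Jbar_k ; Jbar_K = g and Jbar_k = min(g, A_k) for k < K *)
Definition Jbar (k : nat) : {ffun 'I_K -> V} -> 'rV[R]_L -> R := Jaux (K - k) k.

Definition Afun (k : nat) (h : {ffun 'I_K -> V}) (w : 'rV[R]_L) : R :=
  Aop k h w (Jbar k.+1).

End CostToGo.

Section Shape.
Variables (R : realType) (L : nat).

Definition concave_on (S : set 'rV[R]_L) (f : 'rV[R]_L -> R) : Prop :=
  forall x y t, S x -> S y -> 0 <= t <= 1 ->
    t * f x + (1 - t) * f y <= f (t *: x + (1 - t) *: y).

Definition rdot (a w : 'rV[R]_L) : R := \sum_i a 0 i * w 0 i.

Definition polyhedron (P : set 'rV[R]_L) : Prop :=
  exists m (a : 'I_m -> 'rV[R]_L) (b : 'I_m -> R),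
    P = [set x | forall j, rdot (a j) x <= b j].

Definition piecewise_linear (S : set 'rV[R]_L) (f : 'rV[R]_L -> R) : Prop :=
  exists n (P : 'I_n -> set 'rV[R]_L) (c : 'I_n -> 'rV[R]_L) (d : 'I_n -> R),
    (forall i, polyhedron (P i)) /\
    (forall x, S x -> exists i, P i x) /\
    (forall i x, S x -> P i x -> f x = rdot (c i) x + d i).

End Shape.

(* Main.v *)
Require Import Defs.
From HB Require Import structures.
From mathcomp Require Import all_boot all_order all_algebra.
From mathcomp Require Import all_classical all_reals all_analysis.
From mathcomp Require Import ring lra.
Import Order.TTheory GRing.Theory Num.Theory.
Import numFieldNormedType.Exports.
Local Open Scope classical_set_scope.
Local Open Scope ring_scope.
Set Implicit Arguments. Unset Strict Implicit. Unset Printing Implicit Defensive.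

Section ML.
Variables (R : realType) (L : nat).
Implicit Types (a b c w x y : 'rV[R]_L) (t : R).

Definition MinLin (f : 'rV[R]_L -> R) : Prop :=
  exists s : seq 'rV[R]_L, forall w, simplex w ->
    (forall c, c \in s -> f w <= rdot c w) /\ exists2 c, c \in s & f w = rdot c w.

Lemma rdotD a b w : rdot (a + b) w = rdot a w + rdot b w.
Proof. by rewrite /rdot -big_split; apply: eq_bigr => i _; rewrite mxE mulrDl. Qed.

Lemma rdotB a b w : rdot (a - b) w = rdot a w - rdot b w.
Proof. by rewrite /rdot -sumrB; apply: eq_bigr => i _; rewrite !mxE mulrBl. Qed.

Lemma rdot0 w : rdot 0 w = 0.
Proof. by rewrite /rdot big1 // => i _; rewrite mxE mul0r. Qed.

Lemma rdot_comb c x y t : rdot c (t *: x + (1 - t) *: y) = t * rdot c x + (1 - t) * rdot c y.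
Proof.
rewrite /rdot !mulr_sumr -big_split; apply: eq_bigr => i _ /=; rewrite !mxE; ring.
Qed.

Lemma rdot_const (r : R) w : simplex w -> rdot (const_mx r : 'rV_L) w = r.
Proof.
case=> _ Hs; rewrite /rdot; transitivity (r * \sum_i w 0 i); last by rewrite Hs mulr1.
by rewrite mulr_sumr; apply: eq_bigr => i _; rewrite mxE.
Qed.

Lemma MinLin_ext f g : (forall w, f w = g w) -> MinLin f -> MinLin g.
Proof. by move=> E [s Hs]; exists s => w Hw; rewrite -E; apply: Hs. Qed.

Lemma MinLin_const (r : R) : MinLin (fun _ => r).
Proof.
exists [:: (const_mx r : 'rV_L)] => w Hw; split.
  by move=> c; rewrite inE => /eqP ->; rewrite rdot_const.
by exists (const_mx r : 'rV_L); rewrite ?inE // rdot_const.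
Qed.

Lemma MinLin_add f g : MinLin f -> MinLin g -> MinLin (fun w => f w + g w).
Proof.
move=> [s1 H1] [s2 H2]; exists [seq a + b | a <- s1, b <- s2] => w Hw.
have [A1 [c1 c1s E1]] := H1 w Hw; have [A2 [c2 c2s E2]] := H2 w Hw.
split.
  move=> c /allpairsP [[a b] /= [ha hb ->]].
  by rewrite rdotD lerD ?A1 ?A2.
exists (c1 + c2); first exact: allpairs_f.
by rewrite rdotD E1 E2.
Qed.

Lemma MinLin_min f g : MinLin f -> MinLin g -> MinLin (fun w => Num.min (f w) (g w)).
Proof.
move=> [s1 H1] [s2 H2]; exists (s1 ++ s2) => w Hw.
have [A1 [c1 c1s E1]] := H1 w Hw; have [A2 [c2 c2s E2]] := H2 w Hw.
split.
  move=> c; rewrite mem_cat => /orP [hc|hc]; rewrite ge_min.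
    by rewrite (A1 c hc).
  by rewrite (A2 c hc) orbT.
case: (lerP (f w) (g w)) => _.
  by exists c1; rewrite ?mem_cat ?c1s.
by exists c2; rewrite ?mem_cat ?c2s ?orbT.
Qed.

Lemma MinLin_sum (I : Type) (r : seq I) (F : I -> 'rV[R]_L -> R) :
  (forall v, MinLin (F v)) -> MinLin (fun w => \sum_(v <- r) F v w).
Proof.
move=> HF; elim: r => [|v r IH].
  apply: (@MinLin_ext (fun _ => 0)); last exact: MinLin_const.
  by move=> w; rewrite big_nil.
apply: (@MinLin_ext (fun w => F v w + \sum_(v <- r) F v w)); last exact: MinLin_add.
move=> w; by rewrite big_cons.
Qed.

End ML.

Section ML2.
Variables (R : realType) (L : nat).
Implicit Types (a b c w x y : 'rV[R]_L) (t : R).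

Lemma MinLin_persp (D : 'I_L -> R) (J : 'rV[R]_L -> R) : (forall i, 0 <= D i) -> MinLin J ->
  MinLin (fun w => let s := \sum_i D i * w 0 i in
     if s == 0 then 0 else s * J (\row_i (D i * w 0 i / s))).
Proof.
move=> D0 [s HJ]; exists [seq \row_i (D i * c 0 i) | c <- s] => w Hw /=.
have [w0 ws] := Hw.
have rdE c : rdot (\row_i (D i * c 0 i)) w = \sum_i c 0 i * (D i * w 0 i).
  by apply: eq_bigr => i _; rewrite mxE; ring.
have tge0 i : 0 <= D i * w 0 i by rewrite mulr_ge0.
case: ifP => /eqP Hs.
  have Z : forall i, D i * w 0 i = 0.
    by move=> i; apply: (psumr_eq0P (fun i _ => tge0 i) Hs).
  have Z' c : rdot (\row_i (D i * c 0 i)) w = 0.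
    by rewrite rdE big1 // => i _; rewrite Z mulr0.
  split.
    by move=> c /mapP [c' _ ->]; rewrite Z'.
  have [_ [c0 c0s _]] := HJ w Hw.
  by exists (\row_i (D i * c0 0 i)); [apply: map_f | rewrite Z'].
set S := \sum_i D i * w 0 i in Hs *.
have Spos : 0 < S by rewrite lt_def; apply/andP; split; [apply/eqP | apply: sumr_ge0].
set u := \row_i (D i * w 0 i / S).
have Hu : simplex u.
  split.
    by move=> i; rewrite mxE divr_ge0 // ltW.
  rewrite (eq_bigr (fun i => (D i * w 0 i) * S^-1)); last by move=> i _; rewrite mxE.
  by rewrite -mulr_suml divff //; apply/eqP.
have key c : S * rdot c u = rdot (\row_i (D i * c 0 i)) w.
  rewrite rdE /rdot mulr_sumr; apply: eq_bigr => i _; rewrite mxE.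
  by field; apply/eqP.
have [A [c1 c1s E1]] := HJ u Hu.
split.
  move=> c /mapP [c' c's ->]; rewrite -key.
  by rewrite ler_wpM2l ?(ltW Spos) // A.
by exists (\row_i (D i * c1 0 i)); [apply: map_f | rewrite -key E1].
Qed.

End ML2.

Section ML3.
Variables (R : realType) (L : nat).
Implicit Types (a b c w x y : 'rV[R]_L) (t : R).

Lemma simplex_ord w : simplex w -> exists j0 : 'I_L, true.
Proof.
case=> _ Hs; case: (pickP (fun _ : 'I_L => true)) => [j0 _|H0]; first by exists j0.
by move: Hs; rewrite big_pred0 // => /eqP; rewrite eq_sym oner_eq0.
Qed.

Lemma minL_le (F : 'I_L -> R) j : minL F <= F j.
Proof. exact: bigmin_le. Qed.

Lemma minL_eq (F : 'I_L -> R) (j0 : 'I_L) : exists j, minL F = F j.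
Proof.
have [i0 _ E] := @eq_bigmin _ _ _ (\big[Num.max/0]_(j < L) F j) j0 xpredT F isT (fun i _ => le_bigmax _ _ i).
by exists i0; rewrite /minL -E.
Qed.

Lemma MinLin_gfun (Q : 'I_L -> 'I_L -> R) : MinLin (gfun Q).
Proof.
exists [seq \row_i Q i j | j <- enum 'I_L] => w Hw.
have rE j : rdot (\row_i Q i j) w = \sum_i Q i j * w 0 i.
  by apply: eq_bigr => i _; rewrite mxE.
split.
  by move=> c /mapP [j _ ->]; rewrite rE; apply: minL_le.
have [j0 _] := simplex_ord Hw.
have [j E] := minL_eq (fun j => \sum_i Q i j * w 0 i) j0.
by exists (\row_i Q i j); [apply: map_f; rewrite mem_enum | rewrite rE; apply: E].
Qed.

End ML3.

Section ML4.
Variables (R : realType) (L K : nat) (V : finType).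
Variables (p : 'I_L -> {ffun 'I_K -> V} -> R) (e : nat -> R) (Q : 'I_L -> 'I_L -> R).
Hypothesis p_ge0 : forall i x, 0 <= p i x.

Lemma Delta_ge0 k h v i : 0 <= Delta p k h v i.
Proof. by rewrite /Delta divr_ge0 // sumr_ge0. Qed.

Lemma MinLin_Jaux n : forall k h, MinLin (Jaux p e Q n k h).
Proof.
elim: n => [|n IH] k h /=; first exact: MinLin_gfun.
apply: (MinLin_min (MinLin_gfun Q)).
rewrite /Aop; apply: MinLin_add; first exact: MinLin_const.
apply: MinLin_sum => v; apply: MinLin_persp.
  by move=> i; apply: Delta_ge0.
exact: IH.
Qed.

Lemma MinLin_Afun k h : MinLin (Afun p e Q k h).
Proof.
rewrite /Afun /Aop; apply: MinLin_add; first exact: MinLin_const.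
apply: MinLin_sum => v; apply: MinLin_persp.
  by move=> i; apply: Delta_ge0.
exact: MinLin_Jaux.
Qed.

End ML4.

Section ML5.
Variables (R : realType) (L : nat).
Implicit Types (a b c w x y : 'rV[R]_L) (t : R).

Lemma MinLin_concave (f : 'rV[R]_L -> R) : MinLin f -> concave_on (@simplex R L) f.
Proof.
move=> [s H] x y t Hx Hy /andP[t0 t1].
have t1' : 0 <= 1 - t by rewrite subr_ge0.
have Hz : simplex (t *: x + (1 - t) *: y).
  split.
    by move=> i; rewrite !mxE addr_ge0 // mulr_ge0 //; [case: Hx | case: Hy].
  transitivity (t * \sum_i x 0 i + (1 - t) * \sum_i y 0 i).
    by rewrite !mulr_sumr -big_split; apply: eq_bigr => i _ /=; rewrite !mxE.
  by case: Hx => _ ->; case: Hy => _ ->; ring.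
have [_ [c cs ->]] := H _ Hz.
have [Ax _] := H _ Hx; have [Ay _] := H _ Hy.
by rewrite rdot_comb lerD // ler_wpM2l // ?Ax ?Ay.
Qed.

Lemma rdot_cont c : continuous (fun w : 'rV[R]_L => rdot c w).
Proof.
rewrite /rdot; elim: (index_enum _) => [|i r IH].
  under eq_fun do rewrite big_nil.
  exact: cst_continuous.
have -> : (fun w : 'rV[R]_L => \sum_(j <- i :: r) c 0 j * w 0 j) =
  (fun w : 'rV[R]_L => c 0 i * w 0 i) + (fun w => \sum_(j <- r) c 0 j * w 0 j).
  by apply/funext => w; rewrite big_cons.
move=> x; apply: continuousD; last exact: IH.
have -> : (fun w : 'rV[R]_L => c 0 i * w 0 i) = (fun _ => c 0 i) \* (fun w : 'rV[R]_L => w 0 i) by [].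
apply: continuousM; first exact: cst_continuous.
exact: coord_continuous.
Qed.

Lemma minseq_cont b r : continuous (fun w => \big[Num.min/rdot b w]_(c <- r) rdot c w).
Proof.
elim: r => [|c r IH].
    under eq_fun do rewrite big_nil.
    exact: rdot_cont.
  have -> : (fun w => \big[Num.min/rdot b w]_(c0 <- c :: r) rdot c0 w) =
    (fun w => rdot c w) \min (fun w => \big[Num.min/rdot b w]_(c0 <- r) rdot c0 w).
    by apply/funext => w; rewrite big_cons.
  move=> x; apply: continuous_min; first exact: rdot_cont.
  exact: IH.
Qed.

Lemma minseq_le (F : 'rV[R]_L -> R) (b0 : R) r c : c \in r -> \big[Num.min/b0]_(x <- r) F x <= F c.
Proof.
elim: r => [|a r IH] //; rewrite in_cons big_cons ge_min => /orP [/eqP ->|cr].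
  by rewrite lexx.
by rewrite IH ?orbT.
Qed.

Lemma MinLin_cont (f : 'rV[R]_L -> R) : MinLin f -> {within @simplex R L, continuous f}.
Proof.
move=> [s H].
pose g w := \big[Num.min/rdot (head 0 s) w]_(c <- s) rdot c w.
have gc : continuous g by apply: minseq_cont.

apply: (@subspace_eq_continuous _ _ _ g); last exact: continuous_subspaceT.
move=> w; rewrite inE => Hw.
have [A [c1 c1s E]] := H w Hw.
apply/eqP; rewrite eq_le; apply/andP; split.
  change (g w <= f w); by rewrite E /g; apply: minseq_le.
change (f w <= g w); rewrite /g big_seq; elim/big_ind: _ => //.
- apply: A; case: s {H g gc} c1s => //= c r _; exact: mem_head.
- by move=> u v Hu Hv; rewrite le_min Hu Hv.
Qed.

End ML5.

Section ML6.
Variables (R : realType) (L : nat).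

Lemma MinLin_pl (f : 'rV[R]_L -> R) : MinLin f -> piecewise_linear (@simplex R L) f.
Proof.
move=> [s H].
pose c (i : 'I_(size s)) := nth 0 s i.
exists (size s), (fun i => [set x | forall j : 'I_(size s), rdot (c i - c j) x <= 0]), c, (fun _ => 0).
split; [|split].
- move=> i; exists (size s), (fun j => c i - c j), (fun _ => 0); reflexivity.
- move=> x Hx; have [A [c1 c1s E]] := H x Hx.
  have Hi : (index c1 s < size s)%N by rewrite index_mem.
  exists (Ordinal Hi) => /= j.
  by rewrite rdotB subr_le0 /c /= nth_index // -E; apply: A; rewrite mem_nth.
- move=> i x Hx /= Pi; have [A [c1 c1s E]] := H x Hx.
  rewrite addr0; apply/eqP; rewrite eq_le; apply/andP; split.
    by apply: A; rewrite /c mem_nth.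
  have Hi : (index c1 s < size s)%N by rewrite index_mem.
  have := Pi (Ordinal Hi).
  by rewrite rdotB subr_le0 /c /= nth_index // -E.
Qed.
End ML6.

Theorem lemma2 (R : realType) (L K : nat) (V : finType)
  (p : 'I_L -> {ffun 'I_K -> V} -> R) (e : nat -> R) (Q : 'I_L -> 'I_L -> R)
  (p_ge0 : forall i x, 0 <= p i x)
  (p_sum1 : \sum_(i < L) \sum_(x : {ffun 'I_K -> V}) p i x = 1)
  (e_gt0 : forall k, (k < K)%N -> 0 < e k)
  (Q_ge0 : forall i j, 0 <= Q i j)
  (k : nat) (hk : (k < K)%N) (h : {ffun 'I_K -> V}) :
  concave_on (@simplex R L) (Afun p e Q k h) /\
  {within @simplex R L, continuous (Afun p e Q k h)} /\
  piecewise_linear (@simplex R L) (Afun p e Q k h).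
Proof.
have H := MinLin_Afun e Q p_ge0 k h.
split; [exact: MinLin_concave | split; [exact: MinLin_cont | exact: MinLin_pl]].
Qed.
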